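(* Let $0<q<1$ and $w,\nu\in\mathbb{C}$ with $q^{-\nu}\notin q^{\mathbb{Z}_+}$ (i.e. $q^{\nu+k}\ne1$ for all $k\in\mathbb{Z}_+$). Then \[ \mathfrak{F}\!\left(\left\{\frac{w}{q^{-(\nu+k)/2}-q^{(\nu+k)/2}}\right\}_{k=0}^\infty\right)={}_0\phi_1(;q^\nu;q,-q^{\nu+1/2}w^2). \]
   Context: Complex powers of $q$ are $q^s=e^{s\log q}$. $(a;q)_k=\prod_{j=0}^{k-1}(1-aq^j)$ and ${}_0\phi_1(;b;q,z)=\sum_{k=0}^\infty\frac{q^{k(k-1)}}{(q;q)_k(b;q)_k}z^k$. For a complex sequence $x=\{x_k\}_{k=0}^{\infty}$ with $\sum_{k\ge0}|x_kx_{k+1}|<\infty$, \[ \mathfrak{F}(x)=1+\sum_{m=1}^\infty(-1)^m\sum_{k_1=0}^\infty\ \sum_{k_2=k_1+2}^\infty\cdots\sum_{k_m=k_{m-1}+2}^\infty x_{k_1}x_{k_1+1}\cdots x_{k_m}x_{k_m+1}. \] *)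

(* Defs.v *)
From Stdlib Require Import Reals.
From Coquelicot Require Import Coquelicot.
Open Scope C_scope.

(* Complex power of a positive real: q^s = e^{s log q}, written out as
   q^{Re s} (cos (Im s * ln q) + i sin (Im s * ln q)). *)
Definition cpow (q : R) (s : C) : C :=
  Cmult (RtoC (Rpower q (Re s)))
        ((cos (Im s * ln q))%R, (sin (Im s * ln q))%R).

(* Sum of a complex series (componentwise Coquelicot Series; junk if divergent). *)
Definition CSeries (a : nat -> C) : C :=
  (Series (fun n => Re (a n)), Series (fun n => Im (a n))).

Definition ex_Cseries (a : nat -> C) : Prop :=
  exists l : C, is_series (V := C_NormedModule) a l.

Fixpoint qpoch (a : C) (q : R) (k : nat) : C :=
  match k with
  | O => RtoC 1
  | S k' => Cmult (qpoch a q k') (Cminus (RtoC 1) (Cmult a (RtoC (q ^ k'))))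
  end.

Definition phi01_term (b : C) (q : R) (z : C) (k : nat) : C :=
  Cdiv (Cmult (RtoC (q ^ (k * (k - 1)))) (Cpow z k))
       (Cmult (qpoch (RtoC q) q k) (qpoch b q k)).

Definition phi01 (b : C) (q : R) (z : C) : C := CSeries (phi01_term b q z).

(* Thus T x m 0 = sum_{k1>=0} sum_{k2>=k1+2} ... sum_{km>=k_{m-1}+2}
                   x_{k1} x_{k1+1} ... x_{km} x_{km+1}. *)
Fixpoint T (x : nat -> C) (m : nat) (j : nat) : C :=
  match m with
  | O => RtoC 1
  | S m' => CSeries (fun i => Cmult (Cmult (x (j + i)%nat) (x (j + i + 1)%nat))
                                    (T x m' (j + i + 2)%nat))
  end.

Definition F_outer_term (x : nat -> C) (m : nat) : C :=
  Cmult (Cpow (RtoC (-1)) (S m)) (T x (S m) 0).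

Definition Ffrak (x : nat -> C) : C := Cplus (RtoC 1) (CSeries (F_outer_term x)).

Definition Ffrak_converges (x : nat -> C) : Prop :=
  (forall m j : nat,
      ex_Cseries (fun i => Cmult (Cmult (x (j + i)%nat) (x (j + i + 1)%nat))
                                 (T x m (j + i + 2)%nat)))
  /\ ex_Cseries (F_outer_term x).

(* Main.v *)
Require Import Defs.
From Stdlib Require Import Reals Lra Lia.
From Coquelicot Require Import Coquelicot.
Open Scope C_scope.

Lemma sum_n_Re (a : nat -> C) n : Re (sum_n a n) = sum_n (fun k => Re (a k)) n.
Proof.
  induction n.
  - rewrite !sum_O. reflexivity.
  - rewrite !sum_Sn. rewrite <- IHn. reflexivity.
Qed.

Lemma sum_n_Im (a : nat -> C) n : Im (sum_n a n) = sum_n (fun k => Im (a k)) n.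
Proof.
  induction n.
  - rewrite !sum_O. reflexivity.
  - rewrite !sum_Sn. rewrite <- IHn. reflexivity.
Qed.

Lemma is_series_C (a : nat -> C) lr li :
  is_series (fun n => Re (a n)) lr -> is_series (fun n => Im (a n)) li ->
  is_series (V := C_NormedModule) a (lr, li).
Proof.
  unfold is_series. intros Hr Hi.
  apply filterlim_locally. intros eps.
  pose proof (proj1 (filterlim_locally _ _) Hr eps) as Hr'.
  pose proof (proj1 (filterlim_locally _ _) Hi eps) as Hi'.
  generalize (filter_and _ _ Hr' Hi'). apply filter_imp.
  intros n [H1 H2]. split.
  - change (ball lr eps (Re (sum_n a n))). rewrite sum_n_Re. exact H1.
  - change (ball li eps (Im (sum_n a n))). rewrite sum_n_Im. exact H2.
Qed.

Lemma CSeries_is (a : nat -> C) lr li :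
  is_series (fun n => Re (a n)) lr -> is_series (fun n => Im (a n)) li ->
  CSeries a = (lr, li).
Proof.
  intros Hr Hi. unfold CSeries.
  rewrite (is_series_unique _ _ Hr), (is_series_unique _ _ Hi). reflexivity.
Qed.

Lemma tele_R (b : nat -> R) :
  is_lim_seq b 0%R -> is_series (fun n => (b n - b (S n))%R) (b 0%nat).
Proof.
  intros Hb.
  assert (E : forall n, sum_n (fun n => (b n - b (S n))%R) n = (b 0%nat - b (S n))%R).
  { induction n.
    - rewrite sum_O. reflexivity.
    - rewrite sum_Sn, IHn. unfold plus. simpl. ring. }
  assert (L : is_lim_seq (fun n => (b 0%nat - b (S n))%R) (b 0%nat)).
  { replace (Finite (b 0%nat)) with (Rbar_minus (b 0%nat) 0%R) by (simpl; f_equal; ring).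
    apply is_lim_seq_minus'.
    - apply is_lim_seq_const.
    - apply (is_lim_seq_incr_1 b 0%R). exact Hb. }
  unfold is_series.
  apply (filterlim_ext (fun n => (b 0%nat - b (S n))%R)).
  { intros n. now rewrite E. }
  exact L.
Qed.

Lemma lim_Re (b : nat -> C) :
  is_lim_seq (fun n => Cmod (b n)) 0%R -> is_lim_seq (fun n => Re (b n)) 0%R.
Proof.
  intros H. apply is_lim_seq_abs_0.
  apply (is_lim_seq_le_le (fun _ => 0%R) _ (fun n => Cmod (b n))).
  - intros n. split. apply Rabs_pos. apply re_le_Cmod.
  - apply is_lim_seq_const.
  - exact H.
Qed.

Lemma im_le_Cmod (c : C) : (Rabs (Im c) <= Cmod c)%R.
Proof.
  destruct c as [x y]. unfold Cmod. simpl.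
  rewrite <- sqrt_Rsqr_abs. apply sqrt_le_1_alt. unfold Rsqr. nra.
Qed.

Lemma lim_Im (b : nat -> C) :
  is_lim_seq (fun n => Cmod (b n)) 0%R -> is_lim_seq (fun n => Im (b n)) 0%R.
Proof.
  intros H. apply is_lim_seq_abs_0.
  apply (is_lim_seq_le_le (fun _ => 0%R) _ (fun n => Cmod (b n))).
  - intros n. split. apply Rabs_pos. apply im_le_Cmod.
  - apply is_lim_seq_const.
  - exact H.
Qed.

Lemma tele_C (b : nat -> C) :
  is_lim_seq (fun n => Cmod (b n)) 0%R ->
  is_series (V := C_NormedModule) (fun n => b n - b (S n)) (b 0%nat) /\
  CSeries (fun n => b n - b (S n)) = b 0%nat.
Proof.
  intros H.
  assert (Hr := tele_R _ (lim_Re _ H)).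
  assert (Hi := tele_R _ (lim_Im _ H)).
  replace (b 0%nat) with (Re (b 0%nat), Im (b 0%nat)) by (destruct (b 0%nat); reflexivity).
  split.
  - apply is_series_C; [exact Hr | exact Hi].
  - apply CSeries_is; [exact Hr | exact Hi].
Qed.

Lemma abs_C (a : nat -> C) : ex_series (fun n => Cmod (a n)) ->
  ex_series (fun n => Re (a n)) /\ ex_series (fun n => Im (a n)).
Proof.
  intros H. split.
  - apply (ex_series_le (V := R_CompleteNormedModule) _ (fun n => Cmod (a n))); [|exact H].
    intros n. apply re_le_Cmod.
  - apply (ex_series_le (V := R_CompleteNormedModule) _ (fun n => Cmod (a n))); [|exact H].
    intros n. apply im_le_Cmod.
Qed.

Lemma ex_Cseries_of (a : nat -> C) :
  ex_series (fun n => Re (a n)) -> ex_series (fun n => Im (a n)) -> ex_Cseries a.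
Proof.
  intros [lr Hr] [li Hi]. exists (lr, li). apply is_series_C; assumption.
Qed.

Lemma CSeries_shift (a : nat -> C) :
  ex_series (fun n => Re (a n)) -> ex_series (fun n => Im (a n)) ->
  CSeries a = a 0%nat + CSeries (fun k => a (S k)).
Proof.
  intros Hr Hi. unfold CSeries.
  rewrite (Series_incr_1 _ Hr), (Series_incr_1 _ Hi).
  destruct (a 0%nat). reflexivity.
Qed.

Lemma CSeries_ext (a b : nat -> C) : (forall n, a n = b n) -> CSeries a = CSeries b.
Proof.
  intros H. unfold CSeries. f_equal; apply Series_ext; intros n; now rewrite H.
Qed.

Lemma ex_Cseries_ext (a b : nat -> C) : (forall n, a n = b n) -> ex_Cseries a -> ex_Cseries b.
Proof.
  intros H [l Hl]. exists l. apply (is_series_ext a); assumption.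
Qed.
Lemma cpow_add q a b : cpow q (a + b) = cpow q a * cpow q b.
Proof.
  unfold cpow. destruct a as [a1 a2], b as [b1 b2]. simpl.
  rewrite Rpower_plus.
  rewrite Rmult_plus_distr_r, cos_plus, sin_plus.
  apply injective_projections; simpl; ring.
Qed.

Lemma cpow_R q r : cpow q (RtoC r) = RtoC (Rpower q r).
Proof.
  unfold cpow. simpl. rewrite Rmult_0_l, cos_0, sin_0.
  apply injective_projections; simpl; ring.
Qed.

Lemma cpow_0 q : cpow q 0 = 1.
Proof. rewrite cpow_R. unfold Rpower. rewrite Rmult_0_l, exp_0. reflexivity. Qed.

Lemma cpow_nz q a : cpow q a <> 0.
Proof.
  intros H. assert (E := cpow_add q a (-a)).
  replace (a + - a) with (RtoC 0) in E by ring.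
  rewrite cpow_0, H, Cmult_0_l in E. apply C1_nz. exact E.
Qed.

Lemma cpow_opp q a : cpow q (- a) = / cpow q a.
Proof.
  assert (E := cpow_add q a (-a)).
  replace (a + - a) with (RtoC 0) in E by ring. rewrite cpow_0 in E.
  assert (N := cpow_nz q a).
  replace (cpow q (-a)) with (/ cpow q a * (cpow q a * cpow q (-a))) by (field; auto).
  rewrite <- E. field. auto.
Qed.

Definition xf (q : R) (w nu : C) (k : nat) : C :=
    Cdiv w (Cminus (cpow q (Copp (Cdiv (Cplus nu (RtoC (INR k))) (RtoC 2))))
                   (cpow q (Cdiv (Cplus nu (RtoC (INR k))) (RtoC 2)))).

Definition uf q nu k := cpow q (nu + RtoC (INR k)).

Lemma two_nz : RtoC 2 <> 0.
Proof. intros H. apply RtoC_inj in H. lra. Qed.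

Lemma uf_S q nu k : (0 < q)%R -> uf q nu (S k) = uf q nu k * RtoC q.
Proof.
  intros Hq. unfold uf. rewrite S_INR, RtoC_plus.
  replace (nu + (RtoC (INR k) + RtoC 1)) with ((nu + RtoC (INR k)) + RtoC 1) by ring.
  rewrite cpow_add, cpow_R, Rpower_1; auto.
Qed.

Lemma uf_k q nu k : (0 < q)%R -> uf q nu k = cpow q nu * RtoC (q ^ k).
Proof.
  intros Hq. unfold uf. rewrite cpow_add, cpow_R, Rpower_pow; auto.
Qed.

Lemma xf_eq q w nu k : uf q nu k <> 1 ->
  xf q w nu k = w * cpow q ((nu + RtoC (INR k)) / RtoC 2) /
      (1 - cpow q ((nu + RtoC (INR k)) / RtoC 2) * cpow q ((nu + RtoC (INR k)) / RtoC 2))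
  /\ cpow q ((nu + RtoC (INR k)) / RtoC 2) * cpow q ((nu + RtoC (INR k)) / RtoC 2) = uf q nu k.
Proof.
  intros Hu.
  set (a := nu + RtoC (INR k)).
  assert (Hh : cpow q (a / RtoC 2) * cpow q (a / RtoC 2) = uf q nu k).
  { unfold uf. fold a. rewrite <- cpow_add. f_equal. field; apply two_nz. }
  split; [|exact Hh].
  unfold xf. fold a. rewrite cpow_opp.
  assert (N := cpow_nz q (a / RtoC 2)).
  assert (N2 : 1 - cpow q (a / RtoC 2) * cpow q (a / RtoC 2) <> 0).
  { rewrite Hh. intros E. apply Hu. 
    replace (uf q nu k) with (1 - (1 - uf q nu k)) by ring; rewrite E; ring. }
  field. split; auto.
Qed.

Lemma xx_eq q w nu k : (0 < q)%R -> uf q nu k <> 1 -> uf q nu (S k) <> 1 ->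
  xf q w nu k * xf q w nu (S k) =
  w * w * RtoC (Rpower q (/ 2)) * uf q nu k / ((1 - uf q nu k) * (1 - uf q nu k * RtoC q)).
Proof.
  intros Hq H0 H1.
  destruct (xf_eq q w nu k H0) as [E0 F0].
  destruct (xf_eq q w nu (S k) H1) as [E1 F1].
  rewrite E0, E1.
  set (h0 := cpow q ((nu + RtoC (INR k)) / RtoC 2)) in *.
  set (h1 := cpow q ((nu + RtoC (INR (S k))) / RtoC 2)) in *.
  assert (P : h0 * h1 = uf q nu k * RtoC (Rpower q (/ 2))).
  { unfold h0, h1, uf. rewrite <- cpow_R, <- !cpow_add. f_equal.
    rewrite S_INR, RtoC_plus. rewrite RtoC_inv by lra. field; apply two_nz. }
  rewrite F0, F1, (uf_S q nu k Hq).
  rewrite (uf_S q nu k Hq) in H1.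
  assert (N0 : 1 - uf q nu k <> 0).
  { intros E. apply H0. replace (uf q nu k) with (1 - (1 - uf q nu k)) by ring; rewrite E; ring. }
  assert (N1 : 1 - uf q nu k * RtoC q <> 0).
  { intros E. apply H1. replace (uf q nu k * RtoC q) with (1 - (1 - uf q nu k * RtoC q)) by ring; rewrite E; ring. }
  transitivity (w * w * (h0 * h1) / ((1 - uf q nu k) * (1 - uf q nu k * RtoC q))).
  { field; auto. }
  rewrite P. field; auto.
Qed.
Definition cf (q : R) (c : C) (m : nat) (u : C) : C :=
  RtoC (q ^ (m * (m - 1)))%R * Cpow (u * c) m / (qpoch (RtoC q) q m * qpoch u q m).

Lemma qpoch_S a q k : qpoch a q (S k) = qpoch a q k * (1 - a * RtoC (q ^ k)%R).
Proof. reflexivity. Qed.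

Lemma qpoch_shift u q n : qpoch u q (S n) = (1 - u) * qpoch (u * RtoC q) q n.
Proof.
  induction n.
  - simpl. ring.
  - rewrite qpoch_S, IHn, qpoch_S. rewrite <- tech_pow_Rmult, RtoC_mult. ring.
Qed.

Lemma qpoch_nz u q n : (forall i, u * RtoC (q ^ i)%R <> 1) -> qpoch u q n <> 0.
Proof.
  intros H. induction n.
  - simpl. apply C1_nz.
  - rewrite qpoch_S. apply Cmult_neq_0; auto.
    intros E. apply (H n). replace (u * RtoC (q ^ n)%R) with (1 - (1 - u * RtoC (q ^ n)%R)) by ring.
    rewrite E. ring.
Qed.

Lemma one_minus_nz (a : C) : a <> 1 -> 1 - a <> 0.
Proof. intros H E. apply H. replace a with (1 - (1 - a)) by ring. rewrite E. ring. Qed.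

Lemma tele_id q c m u : (0 < q < 1)%R -> (forall i, u * RtoC (q ^ i)%R <> 1) ->
  cf q c (S m) u - cf q c (S m) (u * RtoC q) =
  c * u / ((1 - u) * (1 - u * RtoC q)) * cf q c m (u * RtoC q * RtoC q).
Proof.
  intros Hq H.
  assert (Hqq : forall i, RtoC q * RtoC (q ^ i)%R <> 1).
  { intros i E. rewrite <- RtoC_mult in E. apply RtoC_inj in E.
    assert (q * q ^ i < 1)%R.
    { rewrite tech_pow_Rmult. apply pow_lt_1_compat; [lra|lia]. }
    lra. }
  unfold cf.
  set (t := RtoC (q ^ m)%R).
  set (A := RtoC (q ^ (m * (m - 1)))%R).
  set (P := Cpow (u * c) m).
  set (Q := qpoch (RtoC q) q m).
  set (S1 := qpoch (u * RtoC q) q m).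
  set (R1 := qpoch (u * RtoC q * RtoC q) q m).
  assert (E1 : qpoch (RtoC q) q (S m) = Q * (1 - RtoC q * t)) by reflexivity.
  assert (E2 : qpoch u q (S m) = (1 - u) * S1) by apply qpoch_shift.
  assert (E3 : qpoch (u * RtoC q) q (S m) = (1 - u * RtoC q) * R1) by apply qpoch_shift.
  assert (E4 : S1 * (1 - u * RtoC q * t) = (1 - u * RtoC q) * R1).
  { rewrite <- E3. reflexivity. }
  assert (E5 : RtoC (q ^ (S m * (S m - 1)))%R = A * t * t).
  { unfold A, t. rewrite <- !RtoC_mult, <- !pow_add. f_equal. f_equal.
    destruct m; simpl; [reflexivity|]. rewrite Nat.sub_0_r. nia. }
  assert (E6 : Cpow (u * c) (S m) = u * c * P) by reflexivity.
  assert (E7 : Cpow (u * RtoC q * c) (S m) = u * RtoC q * c * (P * t)).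
  { rewrite Cpow_S. f_equal. unfold P, t.
    replace (u * RtoC q * c) with ((u * c) * RtoC q) by ring.
    rewrite Cpow_mult_l, RtoC_pow. reflexivity. }
  assert (E8 : Cpow (u * RtoC q * RtoC q * c) m = P * t * t).
  { unfold P, t.
    replace (u * RtoC q * RtoC q * c) with ((u * c) * (RtoC q * RtoC q)) by ring.
    rewrite !Cpow_mult_l, RtoC_pow. ring. }
  rewrite E1, E2, E3, E5, E6, E7, E8.
  assert (NQ : Q <> 0) by (apply qpoch_nz; auto).
  assert (NR : R1 <> 0).
  { apply qpoch_nz. intros i. specialize (H (S (S i))).
    replace (u * RtoC q * RtoC q * RtoC (q ^ i)%R) with (u * RtoC (q ^ S (S i))%R); [exact H|].
    simpl. rewrite !RtoC_mult. ring. }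
  assert (N0 : 1 - u <> 0).
  { apply one_minus_nz. specialize (H 0%nat). simpl in H. rewrite Cmult_1_r in H. exact H. }
  assert (N1 : 1 - u * RtoC q <> 0).
  { apply one_minus_nz. specialize (H 1%nat). simpl in H. rewrite Rmult_1_r in H. exact H. }
  assert (N2 : 1 - u * RtoC q * t <> 0).
  { apply one_minus_nz. specialize (H (S m)). unfold t.
    replace (u * RtoC q * RtoC (q ^ m)%R) with (u * RtoC (q ^ S m)%R); [exact H|].
    simpl. rewrite RtoC_mult. ring. }
  assert (N3 : 1 - RtoC q * t <> 0) by (apply one_minus_nz; apply Hqq).
  assert (ES1 : S1 = (1 - u * RtoC q) * R1 / (1 - u * RtoC q * t)).
  { rewrite <- E4. field. auto. }
  rewrite ES1. field. repeat split; auto.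
Qed.
Lemma pow_le1 (x : R) n : (0 <= x <= 1)%R -> (x ^ n <= 1)%R.
Proof.
  intros H. induction n; simpl; [lra|].
  assert (0 <= x ^ n)%R by (apply pow_le; lra). nra.
Qed.

Lemma Cmod_1_minus_ge (x : C) : (1 - Cmod x <= Cmod (1 - x))%R.
Proof.
  assert (H := Cmod_triangle (1 - x) x).
  replace (1 - x + x) with (RtoC 1) in H by ring. rewrite Cmod_1 in H. lra.
Qed.

Lemma qpoch_lb_half q u : (0 < q < 1)%R -> (Cmod u <= / 2)%R ->
  forall n, ((/ 2) ^ n <= Cmod (qpoch u q n))%R.
Proof.
  intros Hq Hu n. induction n.
  - simpl. rewrite Cmod_1. lra.
  - rewrite qpoch_S, Cmod_mult. simpl.
    assert (F : (/ 2 <= Cmod (1 - u * RtoC (q ^ n)%R))%R).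
    { eapply Rle_trans; [|apply Cmod_1_minus_ge].
      rewrite Cmod_mult, Cmod_R, Rabs_pos_eq by (apply pow_le; lra).
      assert (q ^ n <= 1)%R by (apply pow_le1; lra).
      assert (0 <= q ^ n)%R by (apply pow_le; lra).
      assert (0 <= Cmod u)%R by apply Cmod_ge_0.
      nra. }
    assert (0 <= (/2) ^ n)%R by (apply pow_le; lra).
    nra.
Qed.

Lemma qpoch_split v q N n :
  qpoch v q (N + n) = qpoch v q N * qpoch (v * RtoC (q ^ N)%R) q n.
Proof.
  induction n.
  - rewrite Nat.add_0_r. simpl. ring.
  - rewrite Nat.add_succ_r, !qpoch_S, IHn, pow_add, RtoC_mult. ring.
Qed.

Lemma eventually_small q (v : C) : (0 < q < 1)%R ->
  exists N, forall n, (N <= n)%nat -> (Cmod (v * RtoC (q ^ n)%R) <= / 2)%R.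
Proof.
  intros Hq.
  assert (Hv := Cmod_ge_0 v).
  destruct (pow_lt_1_zero q ltac:(rewrite Rabs_pos_eq; lra) (/ (2 * (Cmod v + 1))))
    as [N HN].
  { apply Rinv_0_lt_compat. lra. }
  exists N. intros n Hn. specialize (HN n Hn).
  rewrite Cmod_mult, Cmod_R.
  assert (0 <= Rabs (q ^ n))%R by apply Rabs_pos.
  assert (Cmod v * Rabs (q ^ n) <= (Cmod v + 1) * / (2 * (Cmod v + 1)))%R.
  { apply Rmult_le_compat; lra. }
  replace ((Cmod v + 1) * / (2 * (Cmod v + 1)))%R with (/ 2)%R in H0 by (field; lra).
  exact H0.
Qed.

Lemma qpoch_ulb q v : (0 < q < 1)%R -> (forall i, v * RtoC (q ^ i)%R <> 1) ->
  exists d, (0 < d)%R /\ forall k, (d * (/ 2) ^ k <= Cmod (qpoch v q k))%R.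
Proof.
  intros Hq H.
  destruct (eventually_small q v Hq) as [N HN].
  assert (Fin : forall M, exists d, (0 < d)%R /\ forall k, (k <= M)%nat -> (d <= Cmod (qpoch v q k))%R).
  { induction M.
    - exists (Cmod (qpoch v q 0)). split.
      + apply Cmod_gt_0. apply qpoch_nz. exact H.
      + intros k Hk. replace k with 0%nat by lia. lra.
    - destruct IHM as [d [Hd Hk]].
      exists (Rmin d (Cmod (qpoch v q (S M)))). split.
      + apply Rmin_pos; auto. apply Cmod_gt_0, qpoch_nz, H.
      + intros k Hk'. destruct (Nat.eq_dec k (S M)) as [->|Ne].
        * apply Rmin_r.
        * eapply Rle_trans; [apply Rmin_l|]. apply Hk. lia. }
  destruct (Fin N) as [d [Hd Hk]].
  exists d. split; auto. intros k.
  assert (P2 : (0 < (/2) ^ k)%R) by (apply pow_lt; lra).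
  destruct (Compare_dec.le_lt_dec k N) as [Hle|Hlt].
  - eapply Rle_trans; [|apply Hk; auto].
    assert ((/2) ^ k <= 1)%R by (apply pow_le1; lra). nra.
  - replace k with (N + (k - N))%nat by lia.
    rewrite qpoch_split, Cmod_mult.
    assert (B1 := Hk N (le_n N)).
    assert (B2 := qpoch_lb_half q _ Hq (HN N (le_n N)) (k - N)).
    assert (B3 : ((/2) ^ (N + (k - N)) <= (/2) ^ (k - N))%R).
    { rewrite pow_add. assert ((/2) ^ N <= 1)%R by (apply pow_le1; lra).
      assert (0 <= (/2) ^ (k - N))%R by (apply pow_le; lra). nra. }
    assert (0 <= (/2) ^ (N + (k - N)))%R by (apply pow_le; lra).
    assert (0 <= (/2) ^ (k - N))%R by (apply pow_le; lra).
    apply Rle_trans with (d * (/2) ^ (k - N))%R.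
    + apply Rmult_le_compat_l; lra.
    + apply Rmult_le_compat; lra.
Qed.

Lemma c_lim q c m v : (0 < q < 1)%R -> (forall i, v * RtoC (q ^ i)%R <> 1) ->
  is_lim_seq (fun i => Cmod (cf q c (S m) (v * RtoC (q ^ i)%R))) 0%R.
Proof.
  intros Hq H.
  destruct (eventually_small q v Hq) as [N HN].
  set (k := S m).
  set (A' := Cmod (RtoC (q ^ (k * (k - 1)))%R)).
  set (Q' := Cmod (qpoch (RtoC q) q k)).
  assert (Hqq : forall i, RtoC q * RtoC (q ^ i)%R <> 1).
  { intros i E. rewrite <- RtoC_mult in E. apply RtoC_inj in E.
    assert (q * q ^ i < 1)%R.
    { rewrite tech_pow_Rmult. apply pow_lt_1_compat; [lra|lia]. }
    lra. }
  assert (HQ : (0 < Q')%R) by (apply Cmod_gt_0, qpoch_nz, Hqq).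
  set (K := (A' * Cmod c ^ k * 2 ^ k / Q' * Cmod v ^ k)%R).
  apply is_lim_seq_le_le_loc with (u := fun _ => 0%R) (w := fun n => (K * q ^ n)%R).
  - exists N. intros n Hn. split; [apply Cmod_ge_0|].
    set (u := v * RtoC (q ^ n)%R).
    assert (Hu : (Cmod u <= /2)%R) by (apply HN; auto).
    assert (Hu' : Cmod u = (Cmod v * q ^ n)%R).
    { unfold u. rewrite Cmod_mult, Cmod_R, Rabs_pos_eq; auto. apply pow_le. lra. }
    assert (HP := qpoch_lb_half q u Hq Hu k).
    assert (P2 : (0 < (/2) ^ k)%R) by (apply pow_lt; lra).
    assert (Hu0 : forall i, u * RtoC (q ^ i)%R <> 1).
    { intros i. unfold u. rewrite <- Cmult_assoc, <- RtoC_mult, <- pow_add. apply H. }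
    unfold cf. fold k.
    rewrite Cmod_div, !Cmod_mult, Cmod_pow, Cmod_mult, Hu'.
    2:{ apply Cmult_neq_0; apply qpoch_nz; auto. }
    fold A' Q'.
    set (P' := Cmod (qpoch u q k)) in *.
    set (qn := (q ^ n)%R).
    assert (Hqn : (0 <= qn <= 1)%R) by (split; [apply pow_le; lra | apply pow_le1; lra]).
    assert (Hqk : (qn ^ k <= qn)%R).
    { unfold k. simpl. assert (qn ^ m <= 1)%R by (apply pow_le1; lra).
      assert (0 <= qn ^ m)%R by (apply pow_le; lra). nra. }
    rewrite !Rpow_mult_distr.
    assert (HA : (0 <= A')%R) by apply Cmod_ge_0.
    assert (Hv : (0 <= Cmod v ^ k)%R) by (apply pow_le, Cmod_ge_0).
    assert (Hc : (0 <= Cmod c ^ k)%R) by (apply pow_le, Cmod_ge_0).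
    assert (Hqk0 : (0 <= qn ^ k)%R) by (apply pow_le; lra).
    assert (H2k : (/ P' <= 2 ^ k)%R).
    { assert (E : (2 ^ k * (/2) ^ k = 1)%R).
      { rewrite <- Rpow_mult_distr. replace (2 * / 2)%R with 1%R by field. apply pow1. }
      apply (Rmult_le_reg_l P'). lra.
      rewrite Rinv_r by lra. nra. }
    assert (HPi : (0 <= / P')%R) by (apply Rlt_le, Rinv_0_lt_compat; lra).
    unfold K. unfold Rdiv.
    rewrite Rinv_mult.
    set (X := (A' * (Cmod v ^ k * qn ^ k * Cmod c ^ k) * / Q')%R).
    assert (HX : (0 <= X)%R).
    { unfold X. apply Rmult_le_pos; [|apply Rlt_le, Rinv_0_lt_compat; lra].
      apply Rmult_le_pos; auto. apply Rmult_le_pos; auto. apply Rmult_le_pos; auto. }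
    replace (A' * (Cmod v ^ k * qn ^ k * Cmod c ^ k) * (/ Q' * / P'))%R with (X * / P')%R
      by (unfold X; ring).
    apply Rle_trans with (X * 2 ^ k)%R.
    + apply Rmult_le_compat_l; auto.
    + unfold X.
      assert (0 <= / Q')%R by (apply Rlt_le, Rinv_0_lt_compat; lra).
      assert (0 <= 2 ^ k)%R by (apply pow_le; lra).
      replace (A' * (Cmod v ^ k * qn ^ k * Cmod c ^ k) * / Q' * 2 ^ k)%R with
        ((A' * Cmod c ^ k * 2 ^ k * / Q' * Cmod v ^ k) * qn ^ k)%R by ring.
      apply Rmult_le_compat_l; auto.
      apply Rmult_le_pos; auto. apply Rmult_le_pos; auto.
      apply Rmult_le_pos; auto. apply Rmult_le_pos; auto.
  - apply is_lim_seq_const.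
  - replace (Finite 0%R) with (Rbar_mult K 0%R) by (simpl; f_equal; ring).
    apply is_lim_seq_scal_l. apply is_lim_seq_geom. rewrite Rabs_pos_eq; lra.
Qed.

Lemma uf_mul q nu j i : (0 < q)%R -> uf q nu j * RtoC (q ^ i)%R = uf q nu (j + i).
Proof.
  intros Hq. rewrite !uf_k by auto. rewrite pow_add, RtoC_mult. ring.
Qed.

Lemma inner_eq q w nu m j : (0 < q < 1)%R -> (forall k, uf q nu k <> 1) ->
  (forall j', T (xf q w nu) m j' = cf q (w * w * RtoC (Rpower q (/ 2))) m (uf q nu j')) ->
  forall i,
  xf q w nu (j + i) * xf q w nu (j + i + 1) * T (xf q w nu) m (j + i + 2) =
  cf q (w * w * RtoC (Rpower q (/ 2))) (S m) (uf q nu (j + i)) -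
  cf q (w * w * RtoC (Rpower q (/ 2))) (S m) (uf q nu (j + S i)).
Proof.
  intros Hq Hnu IH i.
  rewrite IH.
  replace (j + i + 1)%nat with (S (j + i)) by lia.
  replace (j + i + 2)%nat with (S (S (j + i))) by lia.
  replace (j + S i)%nat with (S (j + i)) by lia.
  rewrite xx_eq by (auto; lra).
  rewrite !(uf_S q nu _ ltac:(lra)).
  rewrite tele_id; auto.
  intros i'. rewrite uf_mul by lra. auto.
Qed.

Lemma T_closed q w nu : (0 < q < 1)%R -> (forall k, uf q nu k <> 1) ->
  forall m j, T (xf q w nu) m j = cf q (w * w * RtoC (Rpower q (/ 2))) m (uf q nu j)
   /\ is_series (V := C_NormedModule)
        (fun i => xf q w nu (j + i) * xf q w nu (j + i + 1) * T (xf q w nu) m (j + i + 2))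
        (cf q (w * w * RtoC (Rpower q (/ 2))) (S m) (uf q nu j)).
Proof.
  intros Hq Hnu.
  set (c := w * w * RtoC (Rpower q (/ 2))).
  assert (Step : forall m, (forall j', T (xf q w nu) m j' = cf q c m (uf q nu j')) ->
     forall j, is_series (V := C_NormedModule)
        (fun i => xf q w nu (j + i) * xf q w nu (j + i + 1) * T (xf q w nu) m (j + i + 2))
        (cf q c (S m) (uf q nu j)) /\
      CSeries (fun i => xf q w nu (j + i) * xf q w nu (j + i + 1) * T (xf q w nu) m (j + i + 2))
        = cf q c (S m) (uf q nu j)).
  { intros m IH j.
    assert (L : is_lim_seq (fun i => Cmod (cf q c (S m) (uf q nu (j + i)))) 0%R).
    { apply (is_lim_seq_ext (fun i => Cmod (cf q c (S m) (uf q nu j * RtoC (q ^ i)%R)))).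
      { intros i. rewrite uf_mul by lra. reflexivity. }
      apply c_lim; auto. intros i. rewrite uf_mul by lra. auto. }
    destruct (tele_C _ L) as [H1 H2].
    rewrite Nat.add_0_r in H1, H2.
    split.
    - eapply is_series_ext; [|exact H1]. intros i. simpl.
      symmetry. apply inner_eq; auto.
    - rewrite <- H2. apply CSeries_ext. intros i. apply inner_eq; auto. }
  intros m. induction m; intros j.
  - assert (E0 : forall j', T (xf q w nu) 0 j' = cf q c 0 (uf q nu j')).
    { intros j'. unfold cf. simpl. field. }
    split; [apply E0|]. apply Step; auto.
  - assert (E : forall j', T (xf q w nu) (S m) j' = cf q c (S m) (uf q nu j')).
    { intros j'. simpl. apply (Step m (fun j'' => proj1 (IHm j''))). }
    split; [apply E|]. apply Step; auto.
Qed.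

Lemma phi_eq q w nu k : (0 < q)%R ->
  phi01_term (cpow q nu) q (Copp (Cmult (cpow q (Cplus nu (RtoC (/ 2)))) (Cpow w 2))) k =
  Cpow (RtoC (-1)) k * cf q (w * w * RtoC (Rpower q (/ 2))) k (uf q nu 0).
Proof.
  intros Hq.
  assert (U0 : uf q nu 0 = cpow q nu).
  { unfold uf. simpl. f_equal. ring. }
  rewrite U0. unfold phi01_term, cf.
  rewrite cpow_add, cpow_R.
  replace (- (cpow q nu * RtoC (Rpower q (/ 2)) * w ^ 2)) with
    (RtoC (-1) * (cpow q nu * (w * w * RtoC (Rpower q (/ 2))))) by (simpl; ring).
  rewrite Cpow_mult_l. unfold Cdiv. ring.
Qed.

Lemma Cmod_m1_pow k : Cmod (Cpow (RtoC (-1)) k) = 1%R.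
Proof. rewrite Cmod_pow, Cmod_R, Rabs_m1. apply pow1. Qed.

Lemma phi_abs q c u0 : (0 < q < 1)%R -> (forall i, u0 * RtoC (q ^ i)%R <> 1) ->
  ex_series (fun k => Cmod (cf q c k u0)).
Proof.
  intros Hq H.
  assert (Hqq : forall i, RtoC q * RtoC (q ^ i)%R <> 1).
  { intros i E. rewrite <- RtoC_mult in E. apply RtoC_inj in E.
    assert (q * q ^ i < 1)%R.
    { rewrite tech_pow_Rmult. apply pow_lt_1_compat; [lra|lia]. }
    lra. }
  destruct (qpoch_ulb q (RtoC q) Hq Hqq) as [d1 [Hd1 B1]].
  destruct (qpoch_ulb q u0 Hq H) as [d2 [Hd2 B2]].
  set (r := (4 * (Cmod u0 * Cmod c) + 1)%R).
  assert (Hr : (0 < r)%R) by (unfold r; assert (0 <= Cmod u0 * Cmod c)%R by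
      (apply Rmult_le_pos; apply Cmod_ge_0); lra).
  set (b := fun k : nat => (q ^ (k * (k - 1)) * r ^ k)%R).
  assert (Hb : ex_series b).
  { apply ex_series_Rabs. apply (ex_series_DAlembert _ 0%R); [lra| |].
    - intros n. unfold b. apply Rgt_not_eq. apply Rmult_lt_0_compat; apply pow_lt; lra.
    - apply (is_lim_seq_ext (fun n => (r * (q * q) ^ n)%R)).
      + intros n. unfold b.
        replace (S n * (S n - 1))%nat with (n * (n - 1) + n + n)%nat
          by (destruct n; simpl; [reflexivity|]; rewrite Nat.sub_0_r; nia).
        rewrite !pow_add. simpl.
        assert (0 < q ^ n)%R by (apply pow_lt; lra).
        assert (0 < q ^ (n * (n - 1)))%R by (apply pow_lt; lra).
        assert (0 < r ^ n)%R by (apply pow_lt; lra).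
        rewrite Rpow_mult_distr.
        rewrite Rabs_pos_eq.
        * field. split; lra.
        * unfold Rdiv. apply Rmult_le_pos.
          -- repeat apply Rmult_le_pos; lra.
          -- apply Rlt_le, Rinv_0_lt_compat. apply Rmult_lt_0_compat; lra.
      + replace (Finite 0%R) with (Rbar_mult r 0%R) by (simpl; f_equal; ring).
        apply is_lim_seq_scal_l. apply is_lim_seq_geom.
        rewrite Rabs_pos_eq; nra. }
  apply (ex_series_le (V := R_CompleteNormedModule) _ (fun k => / (d1 * d2) * b k)%R).
  2:{ apply (ex_series_scal_l (V := R_NormedModule)). exact Hb. }
  intros k.
  change (norm (Cmod (cf q c k u0))) with (Rabs (Cmod (cf q c k u0))).
  rewrite Rabs_pos_eq by apply Cmod_ge_0.
  assert (NQ : qpoch (RtoC q) q k <> 0) by (apply qpoch_nz; auto).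
  assert (NP : qpoch u0 q k <> 0) by (apply qpoch_nz; auto).
  unfold cf. rewrite Cmod_div by (apply Cmult_neq_0; auto).
  rewrite !Cmod_mult, Cmod_pow, Cmod_mult, Cmod_R, Rabs_pos_eq by (apply pow_le; lra).
  set (A := (q ^ (k * (k - 1)))%R).
  assert (HA : (0 <= A)%R) by (apply pow_le; lra).
  set (h := ((/ 2) ^ k)%R).
  assert (Hh : (0 < h)%R) by (apply pow_lt; lra).
  specialize (B1 k). specialize (B2 k). fold h in B1, B2.
  set (Q := Cmod (qpoch (RtoC q) q k)) in *.
  set (P := Cmod (qpoch u0 q k)) in *.
  set (UC := (Cmod u0 * Cmod c)%R).
  assert (HUC : (0 <= UC)%R) by (apply Rmult_le_pos; apply Cmod_ge_0).
  assert (H4 : ((4 * UC) ^ k <= r ^ k)%R).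
  { apply pow_incr. split; [lra|]. unfold r. fold UC. lra. }
  assert (E4 : (UC ^ k / (h * h) = (4 * UC) ^ k)%R).
  { unfold h. rewrite Rpow_mult_distr, <- Rpow_mult_distr.
    replace (/ 2 * / 2)%R with (/ 4)%R by field.
    rewrite pow_inv. field. apply pow_nonzero. lra. }
  assert (HQP : (d1 * h * (d2 * h) <= Q * P)%R).
  { apply Rmult_le_compat; try lra; apply Rmult_le_pos; lra. }
  assert (Hdh : (0 < d1 * h * (d2 * h))%R) by (repeat apply Rmult_lt_0_compat; lra).
  apply Rle_trans with (A * UC ^ k / (d1 * h * (d2 * h)))%R.
  - unfold Rdiv. apply Rmult_le_compat_l.
    + apply Rmult_le_pos; [lra|]. apply pow_le. lra.
    + apply Rinv_le_contravar; lra.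
  - replace (A * UC ^ k / (d1 * h * (d2 * h)))%R with (/ (d1 * d2) * (A * (UC ^ k / (h * h))))%R
      by (field; repeat split; lra).
    rewrite E4. unfold b. fold A.
    apply Rmult_le_compat_l.
    + apply Rlt_le, Rinv_0_lt_compat, Rmult_lt_0_compat; lra.
    + apply Rmult_le_compat_l; lra.
Qed.

Theorem mainTheorem6 (q : R) (w nu : C) :
  (0 < q < 1)%R ->
  (forall k : nat, cpow q (Cplus nu (RtoC (INR k))) <> RtoC 1) ->
  let x := fun k : nat =>
    Cdiv w (Cminus (cpow q (Copp (Cdiv (Cplus nu (RtoC (INR k))) (RtoC 2))))
                   (cpow q (Cdiv (Cplus nu (RtoC (INR k))) (RtoC 2)))) in
  Ffrak_converges x
  /\ ex_Cseries (phi01_term (cpow q nu) q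
                   (Copp (Cmult (cpow q (Cplus nu (RtoC (/ 2)))) (Cpow w 2))))
  /\ Ffrak x = phi01 (cpow q nu) q
                 (Copp (Cmult (cpow q (Cplus nu (RtoC (/ 2)))) (Cpow w 2))).
Proof.
  intros Hq Hnu.
  change (let x := xf q w nu in
    Ffrak_converges x
  /\ ex_Cseries (phi01_term (cpow q nu) q
                   (Copp (Cmult (cpow q (Cplus nu (RtoC (/ 2)))) (Cpow w 2))))
  /\ Ffrak x = phi01 (cpow q nu) q
                 (Copp (Cmult (cpow q (Cplus nu (RtoC (/ 2)))) (Cpow w 2)))).
  intros x. unfold x. clear x.
  assert (Hu : forall k, uf q nu k <> 1) by exact Hnu.
  set (z := Copp (Cmult (cpow q (Cplus nu (RtoC (/ 2)))) (Cpow w 2))).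
  set (c := w * w * RtoC (Rpower q (/ 2))).
  set (phi := phi01_term (cpow q nu) q z).
  assert (Hphi : forall k, phi k = Cpow (RtoC (-1)) k * cf q c k (uf q nu 0)).
  { intros k. unfold phi, z, c. apply phi_eq. lra. }
  assert (Habs : ex_series (fun k => Cmod (phi k))).
  { apply (ex_series_ext (fun k => Cmod (cf q c k (uf q nu 0)))).
    - intros k. rewrite Hphi, Cmod_mult, Cmod_m1_pow, Rmult_1_l; reflexivity.
    - apply phi_abs; auto. intros i. rewrite uf_mul by lra. auto. }
  destruct (abs_C _ Habs) as [Hre Him].
  assert (Hout : forall m, F_outer_term (xf q w nu) m = phi (S m)).
  { intros m. unfold F_outer_term. rewrite Hphi. f_equal.
    apply (proj1 (T_closed q w nu Hq Hu (S m) 0)). }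
  assert (HabsS : ex_series (fun k => Cmod (phi (S k)))).
  { apply (ex_series_incr_1 (fun k => Cmod (phi k))). exact Habs. }
  destruct (abs_C _ HabsS) as [HreS HimS].
  split; [split|split].
  - intros m j. exists (cf q c (S m) (uf q nu j)).
    apply (proj2 (T_closed q w nu Hq Hu m j)).
  - apply (ex_Cseries_ext (fun m => phi (S m))).
    + intros m. symmetry. apply Hout.
    + apply ex_Cseries_of; auto.
  - apply ex_Cseries_of; auto.
  - unfold Ffrak, phi01. fold phi.
    rewrite (CSeries_shift phi Hre Him).
    rewrite (CSeries_ext _ _ Hout).
    f_equal. unfold phi, phi01_term. simpl. field.
Qed.
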